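(* Let $(A,\cdot,\omega)$ be a symmetric twisted partial $H$-module algebra and let $u,v\in\mathrm{Hom}(H,A)$ be weakly convolution-invertible linear maps, such that $v*u$ is weakly convolution-invertible with $(v*u)^{-1}=u^{-1}*v^{-1}$. Then $\omega^{v*u}=(\omega^{u})^{v}$ and $\cdot^{v*u}=(\cdot^{u})^{v}$, i.e. $h\cdot^{v*u}a=h(\cdot^u)^v a$ for all $h\in H$, $a\in A$, where $(\omega^u)^v$ and $(\cdot^u)^v$ denote the transforms by $v$ of the pair $(\omega^u,\cdot^u)$.
   Context: $k$ a field, $H$ a Hopf algebra over $k$ with Sweedler notation $\Delta(h)=h_{(1)}\otimes h_{(2)}$, counit $\varepsilon$, antipode $S$; $A$ a unital $k$-algebra. A twisted partial action of $H$ on $A$ is a pair of linear maps $h\otimes a\mapsto h\cdot a$ and $\omega:H\otimes H\to A$ with $1_H\cdot a=a$, $h\cdot(ab)=(h_{(1)}\cdot a)(h_{(2)}\cdot b)$, $(h_{(1)}\cdot(l_{(1)}\cdot a))\omega(h_{(2)},l_{(2)})=\omega(h_{(1)},l_{(1)})(h_{(2)}l_{(2)}\cdot a)$, $\omega(h,l)=\omega(h_{(1)},l_{(1)})(h_{(2)}l_{(2)}\cdot 1_A)$. Convolution on $\mathrm{Hom}(H,A)$: $(f*g)(h)=f(h_{(1)})g(h_{(2)})$, and similarly on $\mathrm{Hom}(H\otimes H,A)$. Let $e(h)=h\cdot1_A$, $f_1(h,k)=(h\cdot 1_A)\varepsilon(k)$, $f_2(h,k)=hk\cdot 1_A$. The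 twisted partial action is symmetric if: $e$ is central in $\mathrm{Hom}(H,A)$; $f_1,f_2$ are central in $\mathrm{Hom}(H\otimes H,A)$; $\omega$ satisfies (N) $\omega(1_H,h)=\omega(h,1_H)=h\cdot 1_A$ and (T3) above, and has a convolution inverse $\omega'$ in the ideal generated by $f_1*f_2$ (i.e. $\omega*\omega'=\omega'*\omega=f_1*f_2$); and $h\cdot(k\cdot 1_A)=(h_{(1)}\cdot 1_A)(h_{(2)}k\cdot 1_A)$ for all $h,k$. A linear map $v\in\mathrm{Hom}(H,A)$ is weakly convolution-invertible if there is $u\in\mathrm{Hom}(H,A)$ with $u*v=v*u=e$, $u(h)=u(h_{(1)})(h_{(2)}\cdot1_A)=(h_{(1)}\cdot1_A)u(h_{(2)})$ and $u(1_H)=v(1_H)=1_A$; write $v^{-1}=u$. For such $v$ define $\omega^v(h,g)=v(h_{(1)})(h_{(2)}\cdot v(g_{(1)}))\omega(h_{(3)},g_{(2)})v^{-1}(h_{(4)}g_{(3)})$ and $h\cdot^v a=v(h_{(1)})(h_{(2)}\cdot a)v^{-1}(h_{(3)})$. *)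

(* Defs.v *)
From HB Require Import structures.
From mathcomp Require Import all_boot all_order all_algebra.
Set Implicit Arguments. Unset Strict Implicit. Unset Printing Implicit Defensive.
Import Order.TTheory GRing.Theory Num.Theory.
Local Open Scope ring_scope.

Definition lin (k : fieldType) (U V : lmodType k) (f : U -> V) : Prop :=
  forall (a : k) (x y : U), f (a *: x + y) = a *: f x + f y.

Definition bilin (k : fieldType) (U1 U2 V : lmodType k) (f : U1 -> U2 -> V) : Prop :=
  (forall x, lin (f x)) /\ (forall y, lin (fun x => f x y)).

Definition trilin (k : fieldType) (U1 U2 U3 V : lmodType k)
    (f : U1 -> U2 -> U3 -> V) : Prop :=
  (forall x y, lin (f x y)) /\ (forall x z, lin (fun y => f x y z))
  /\ (forall y z, lin (fun x => f x y z)).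

(* The comultiplication is represented by a finite Sweedler expansion
   delta h = [:: (h_(1), h_(2)); ...], i.e. Delta(h) = \sum_(p <- delta h) p.1 (x) p.2.
   All properties of Delta are stated through the universal property of the
   tensor product: they are required after contraction with every
   (bi/tri)linear map into every k-vector space V. *)
Definition sw (k : fieldType) (H : algType k) (V : lmodType k)
    (delta : H -> seq (H * H)) (h : H) (f : H -> H -> V) : V :=
  \sum_(p <- delta h) f p.1 p.2.

Definition is_hopf (k : fieldType) (H : algType k)
    (delta : H -> seq (H * H)) (eps : H -> k) (S : H -> H) : Prop :=
  (* Delta is a well-defined linear map H -> H (x) H *)
  (forall (V : lmodType k) (f : H -> H -> V), bilin f ->
      lin (fun h => sw delta h f))
  /\ (forall (V : lmodType k) (f : H -> H -> H -> V), trilin f -> forall h,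
      \sum_(p <- delta h) \sum_(q <- delta p.1) f q.1 q.2 p.2
      = \sum_(p <- delta h) \sum_(q <- delta p.2) f p.1 q.1 q.2)
  /\ (forall (a : k) (x y : H), eps (a *: x + y) = a * eps x + eps y)
  /\ (forall h, \sum_(p <- delta h) eps p.1 *: p.2 = h)
  /\ (forall h, \sum_(p <- delta h) eps p.2 *: p.1 = h)
  /\ (forall (V : lmodType k) (f : H -> H -> V), bilin f -> forall x y,
      sw delta (x * y) f
      = \sum_(p <- delta x) \sum_(q <- delta y) f (p.1 * q.1) (p.2 * q.2))
  /\ (forall (V : lmodType k) (f : H -> H -> V), bilin f -> sw delta 1 f = f 1 1)
  /\ (forall x y, eps (x * y) = eps x * eps y)
  /\ eps 1 = 1
  /\ lin S
  /\ (forall h, \sum_(p <- delta h) S p.1 * p.2 = eps h *: 1)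
  /\ (forall h, \sum_(p <- delta h) p.1 * S p.2 = eps h *: 1).

Section TPA.
Variables (k : fieldType) (H : algType k) (A : algType k).
Variable (delta : H -> seq (H * H)).

Definition conv1 (f g : H -> A) (h : H) : A := sw delta h (fun x y => f x * g y).

(* convolution on Hom(H (x) H, A), bilinear maps representing H (x) H -> A *)
Definition conv2 (F G : H -> H -> A) (h l : H) : A :=
  \sum_(p <- delta h) \sum_(q <- delta l) F p.1 q.1 * G p.2 q.2.

Variables (eps : H -> k) (act : H -> A -> A) (omega : H -> H -> A).

Definition e_map (h : H) : A := act h 1.
Definition f1_map (h l : H) : A := eps l *: act h 1.
Definition f2_map (h l : H) : A := act (h * l) 1.

Definition twisted_partial_action : Prop :=
  bilin act /\ bilin omega
  /\ (forall a, act 1 a = a)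
  /\ (forall h a b, act h (a * b) = sw delta h (fun x y => act x a * act y b))
  /\ (forall h l a,
        \sum_(p <- delta h) \sum_(q <- delta l) act p.1 (act q.1 a) * omega p.2 q.2
      = \sum_(p <- delta h) \sum_(q <- delta l) omega p.1 q.1 * act (p.2 * q.2) a)
  /\ (forall h l,
        omega h l = \sum_(p <- delta h) \sum_(q <- delta l)
                      omega p.1 q.1 * act (p.2 * q.2) 1).

Definition symmetric_tpa : Prop :=
  twisted_partial_action
  /\ (forall f : H -> A, lin f -> forall h, conv1 e_map f h = conv1 f e_map h)
  /\ (forall F : H -> H -> A, bilin F ->
        forall h l, conv2 f1_map F h l = conv2 F f1_map h l)
  /\ (forall F : H -> H -> A, bilin F ->
        forall h l, conv2 f2_map F h l = conv2 F f2_map h l)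
  /\ (forall h, omega 1 h = act h 1 /\ omega h 1 = act h 1)
  /\ (exists omega' : H -> H -> A, bilin omega'
        /\ (forall h l, conv2 omega omega' h l = conv2 f1_map f2_map h l)
        /\ (forall h l, conv2 omega' omega h l = conv2 f1_map f2_map h l))
  /\ (forall h l, act h (act l 1) = sw delta h (fun x y => act x 1 * act (y * l) 1)).

(* u is a weak convolution inverse of the linear map v (so v^{-1} = u) *)
Definition weak_inv (v u : H -> A) : Prop :=
  lin v /\ lin u
  /\ (forall h, conv1 u v h = e_map h) /\ (forall h, conv1 v u h = e_map h)
  /\ (forall h, u h = sw delta h (fun x y => u x * act y 1))
  /\ (forall h, u h = sw delta h (fun x y => act x 1 * u y))
  /\ u 1 = 1 /\ v 1 = 1.

(* omega^v (h, g) = v(h1) (h2 . v(g1)) omega(h3, g2) v^{-1}(h4 g3) *)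
Definition omega_tr (v vinv : H -> A) (h g : H) : A :=
  \sum_(p <- delta h) \sum_(q <- delta p.2) \sum_(r <- delta q.2)
  \sum_(s <- delta g) \sum_(t <- delta s.2)
    v p.1 * act q.1 (v s.1) * omega r.1 t.1 * vinv (r.2 * t.2).

(* h .^v a = v(h1) (h2 . a) v^{-1}(h3) *)
Definition act_tr (v vinv : H -> A) (h : H) (a : A) : A :=
  \sum_(p <- delta h) \sum_(q <- delta p.2) v p.1 * act q.1 a * vinv q.2.

End TPA.

(* Main.v *)
Require Import Defs.
From HB Require Import structures.
From mathcomp Require Import all_boot all_order all_algebra.
From Stdlib Require Import FunctionalExtensionality.
Import Order.TTheory GRing.Theory Num.Theory.
Set Implicit Arguments. Unset Strict Implicit. Unset Printing Implicit Defensive.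
Local Open Scope ring_scope.

Section Lin.
Variable k : fieldType.

Lemma lin0 (U V : lmodType k) (f : U -> V) : lin f -> f 0 = 0.
Proof.
move=> hf; have E := hf 1 0 0; rewrite !scale1r addr0 in E.
by apply: (@addrI _ (f 0)); rewrite addr0 -E.
Qed.

Lemma linD (U V : lmodType k) (f : U -> V) : lin f -> forall x y, f (x + y) = f x + f y.
Proof. by move=> hf x y; have := hf 1 x y; rewrite !scale1r. Qed.

Lemma linZ (U V : lmodType k) (f : U -> V) : lin f -> forall a x, f (a *: x) = a *: f x.
Proof. by move=> hf a x; have := hf a x 0; rewrite !addr0 (lin0 hf) addr0. Qed.

Lemma lin_sum (U V : lmodType k) (f : U -> V) (I : Type) (s : seq I) (F : I -> U) :
  lin f -> f (\sum_(i <- s) F i) = \sum_(i <- s) f (F i).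
Proof.
move=> hf; elim: s => [|x s IH]; first by rewrite !big_nil (lin0 hf).
by rewrite !big_cons (linD hf) IH.
Qed.

Lemma lin_sumf (U V : lmodType k) (I : Type) (s : seq I) (G : I -> U -> V) :
  (forall i, lin (G i)) -> lin (fun x => \sum_(i <- s) G i x).
Proof.
move=> hG a x y /=; rewrite scaler_sumr -big_split /=.
by apply: eq_bigr => i _; rewrite hG.
Qed.

Lemma lin_comp (U V W : lmodType k) (f : V -> W) (g : U -> V) :
  lin f -> lin g -> lin (fun x => f (g x)).
Proof. by move=> hf hg a x y; rewrite hg hf. Qed.

Lemma lin_mull (U : lmodType k) (A : algType k) (f : U -> A) (c : A) :
  lin f -> lin (fun x => f x * c).
Proof. by move=> hf a x y; rewrite hf mulrDl scalerAl. Qed.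

Lemma lin_mulr (U : lmodType k) (A : algType k) (f : U -> A) (c : A) :
  lin f -> lin (fun x => c * f x).
Proof. by move=> hf a x y; rewrite hf mulrDr scalerAr. Qed.

Lemma lin_id (U : lmodType k) : lin (fun x : U => x).
Proof. by []. Qed.

Lemma lin_mulHl (A : algType k) (c : A) : lin (fun x : A => x * c).
Proof. exact: (lin_mull c (@lin_id A)). Qed.
Lemma lin_mulHr (A : algType k) (c : A) : lin (fun x : A => c * x).
Proof. exact: (lin_mulr c (@lin_id A)). Qed.

End Lin.
Section Hopf.
Variables (k : fieldType) (H : algType k) (delta : H -> seq (H * H))
  (eps : H -> k) (S : H -> H).
Hypothesis hH : is_hopf delta eps S.
Variable A : algType k.

Lemma sw_lin (V : lmodType k) (f : H -> H -> V) : bilin f -> lin (fun h => sw delta h f).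
Proof. by case: hH => h1 _; apply: h1. Qed.

Lemma coassoc (V : lmodType k) (f : H -> H -> H -> V) : trilin f -> forall h,
      \sum_(p <- delta h) \sum_(q <- delta p.1) f q.1 q.2 p.2
      = \sum_(p <- delta h) \sum_(q <- delta p.2) f p.1 q.1 q.2.
Proof. by case: hH => _ [h2 _]; apply: h2. Qed.

Lemma eps_lin : forall (a : k) (x y : H), eps (a *: x + y) = a * eps x + eps y.
Proof. by case: hH => _ [_ [h3 _]]. Qed.

Lemma counitL h : \sum_(p <- delta h) eps p.1 *: p.2 = h.
Proof. by case: hH => _ [_ [_ [h4 _]]]. Qed.
Lemma counitR h : \sum_(p <- delta h) eps p.2 *: p.1 = h.
Proof. by case: hH => _ [_ [_ [_ [h5 _]]]]. Qed.

Lemma delta_mul (V : lmodType k) (f : H -> H -> V) : bilin f -> forall x y,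
      sw delta (x * y) f
      = \sum_(p <- delta x) \sum_(q <- delta y) f (p.1 * q.1) (p.2 * q.2).
Proof. by case: hH => _ [_ [_ [_ [_ [h6 _]]]]]; apply: h6. Qed.

Lemma counitL_lin (V : lmodType k) (f : H -> V) h : lin f ->
  \sum_(p <- delta h) eps p.1 *: f p.2 = f h.
Proof.
move=> hf; rewrite -{2}(counitL h) (lin_sum _ _ hf).
by apply: eq_bigr => p _; rewrite (linZ hf).
Qed.
Lemma counitR_lin (V : lmodType k) (f : H -> V) h : lin f ->
  \sum_(p <- delta h) eps p.2 *: f p.1 = f h.
Proof.
move=> hf; rewrite -{2}(counitR h) (lin_sum _ _ hf).
by apply: eq_bigr => p _; rewrite (linZ hf).
Qed.

Definition Eps (L : H -> A) (x y : H) : A := eps y *: L x.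
Definition Qm (act' : H -> A -> A) (v : H -> A) (x y : H) : A := act' x (v y).
Definition Mm (w : H -> A) (x y : H) : A := w (x * y).

Local Notation "F ** G" := (conv2 delta F G) (at level 40, left associativity).

Lemma bilin_conv2 (F G : H -> H -> A) : bilin F -> bilin G -> bilin (F ** G).
Proof.
move=> [F1 F2] [G1 G2]; split.
- move=> h; rewrite /conv2.
  apply: lin_sumf => p.
  apply: (sw_lin (f := fun a b => F p.1 a * G p.2 b)); split.
  + by move=> a; apply: lin_mulr.
  + by move=> b; apply: lin_mull.
- move=> l; rewrite /conv2.
  apply: (sw_lin (f := fun x y => \sum_(q <- delta l) F x q.1 * G y q.2)); split.
  + move=> x; apply: lin_sumf => q; exact: lin_mulr.
  + move=> y; apply: lin_sumf => q; exact: lin_mull.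
Qed.

Lemma bilin_Eps (L : H -> A) : lin L -> bilin (Eps L).
Proof.
move=> hL; split.
- by move=> x a y z; rewrite /Eps eps_lin scalerDl scalerA.
- by move=> y a x z; rewrite /Eps hL scalerDr !scalerA mulrC.
Qed.

Lemma bilin_Q (act' : H -> A -> A) (v : H -> A) : bilin act' -> lin v -> bilin (Qm act' v).
Proof.
move=> [a1 a2] hv; split.
- by move=> x; apply: (lin_comp (a1 x) hv).
- by move=> y; apply: a2.
Qed.

Lemma bilin_M (w : H -> A) : lin w -> bilin (Mm w).
Proof.
move=> hw; split.
- move=> x a y z; rewrite /Mm -hw; congr w.
  by rewrite mulrDr scalerAr.
- move=> y a x z; rewrite /Mm -hw; congr w.
  by rewrite mulrDl scalerAl.
Qed.

Lemma conv2A (F G K : H -> H -> A) : bilin F -> bilin G -> bilin K ->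
  (F ** G) ** K = F ** (G ** K).
Proof.
move=> [F1 F2] [G1 G2] [K1 K2].
apply: functional_extensionality => h; apply: functional_extensionality => g.
rewrite /conv2.
pose T x y z := \sum_(q <- delta g) \sum_(q' <- delta q.1)
                  F x q'.1 * G y q'.2 * K z q.2.
have eL : \sum_(p <- delta h) \sum_(q <- delta g)
     (\sum_(p0 <- delta p.1) \sum_(q0 <- delta q.1) F p0.1 q0.1 * G p0.2 q0.2) * K p.2 q.2
   = \sum_(p <- delta h) \sum_(p' <- delta p.1) T p'.1 p'.2 p.2.
  apply: eq_bigr => p _; rewrite /T exchange_big /=; apply: eq_bigr => q _.
  rewrite mulr_suml; apply: eq_bigr => p' _; rewrite mulr_suml.
  by apply: eq_bigr.
rewrite eL coassoc; last first.
  split; [|split].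
  - move=> x y; apply: lin_sumf => q; apply: lin_sumf => q'; exact: lin_mulr.
  - move=> x z; apply: lin_sumf => q; apply: lin_sumf => q'.
    exact: (lin_mull _ (lin_mulr _ (G2 _))).
  - move=> y z; apply: lin_sumf => q; apply: lin_sumf => q'.
    exact: (lin_mull _ (lin_mull _ (F2 _))).
apply: eq_bigr => p _; rewrite /T /=.
rewrite [RHS](eq_bigr (fun q => \sum_(p' <- delta p.2) \sum_(q' <- delta q.2)
          F p.1 q.1 * G p'.1 q'.1 * K p'.2 q'.2)); last first.
  move=> q _; rewrite mulr_sumr; apply: eq_bigr => p' _; rewrite mulr_sumr.
  by apply: eq_bigr => q' _; rewrite mulrA.
rewrite [RHS]exchange_big /=; apply: eq_bigr => p' _.
apply: (coassoc (f := fun a b c => F p.1 a * G p'.1 b * K p'.2 c)).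
split; [|split].
- move=> a b; exact: lin_mulr.
- move=> a c; exact: (lin_mull _ (lin_mulr _ (G1 _))).
- move=> b c; exact: (lin_mull _ (lin_mull _ (F1 _))).
Qed.

Lemma lconv (L : H -> A) (B : H -> H -> A) h g : (forall x, lin (B x)) ->
  (Eps L ** B) h g = \sum_(p <- delta h) L p.1 * B p.2 g.
Proof.
move=> hB; rewrite /conv2; apply: eq_bigr => p _.
rewrite -(counitL_lin g (hB p.2)) mulr_sumr; apply: eq_bigr => q _.
by rewrite /Eps -scalerAl scalerAr.
Qed.

Lemma rconv (L : H -> A) (B : H -> H -> A) h g : (forall x, lin (B x)) ->
  (B ** Eps L) h g = \sum_(p <- delta h) B p.1 g * L p.2.
Proof.
move=> hB; rewrite /conv2; apply: eq_bigr => p _.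
rewrite -(counitR_lin g (hB p.1)) mulr_suml; apply: eq_bigr => q _.
by rewrite /Eps -scalerAr scalerAl.
Qed.

Lemma conv1_lin (f g : H -> A) : lin f -> lin g -> lin (conv1 delta f g).
Proof.
move=> hf hg; apply: (sw_lin (f := fun x y => f x * g y)); split.
- by move=> x; apply: lin_mulr.
- by move=> y; apply: lin_mull.
Qed.

Lemma conv1A (f g l : H -> A) : lin f -> lin g -> lin l -> forall h,
  conv1 delta (conv1 delta f g) l h = conv1 delta f (conv1 delta g l) h.
Proof.
move=> hf hg hl h; rewrite /conv1 /sw.
rewrite (eq_bigr (fun p => \sum_(q <- delta p.1) f q.1 * g q.2 * l p.2)); last first.
  by move=> p _; rewrite mulr_suml.
rewrite (coassoc (f := fun x y z => f x * g y * l z)); last first.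
  split; [|split].
  - move=> x y; exact: lin_mulr.
  - move=> x z; exact: (lin_mull _ (lin_mulr _ hg)).
  - move=> y z; exact: (lin_mull _ (lin_mull _ hf)).
apply: eq_bigr => p _; rewrite mulr_sumr; apply: eq_bigr => q _; by rewrite mulrA.
Qed.

Lemma act_tr_conv (act' : H -> A -> A) (v v' : H -> A) h a :
  act_tr delta act' v v' h a = conv1 delta v (conv1 delta (fun x => act' x a) v') h.
Proof.
rewrite /act_tr /conv1 /sw; apply: eq_bigr => p _; rewrite mulr_sumr.
by apply: eq_bigr => q _; rewrite mulrA.
Qed.

Lemma omega_conv (act' : H -> A -> A) (Om : H -> H -> A) (v v' : H -> A) h g :
  bilin act' -> bilin Om -> lin v -> lin v' ->
  omega_tr delta act' Om v v' h g
  = (Eps v ** (Qm act' v ** (Om ** Mm v'))) h g.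
Proof.
move=> ha hO hv hv'.
have hB : bilin (Qm act' v ** (Om ** Mm v')).
  by apply: bilin_conv2; [apply: bilin_Q | apply: bilin_conv2 => //; apply: bilin_M].
rewrite lconv; last by case: hB.
rewrite /omega_tr /conv2 /Qm /Mm; apply: eq_bigr => p _; rewrite mulr_sumr.
apply: eq_bigr => q _; rewrite exchange_big /= mulr_sumr.
apply: eq_bigr => s _; rewrite mulr_sumr mulr_sumr.
apply: eq_bigr => r _; rewrite mulr_sumr mulr_sumr.
apply: eq_bigr => t _.
by rewrite !mulrA.
Qed.

Lemma Eps_conv1 (v u : H -> A) : lin v -> lin u ->
  Eps (conv1 delta v u) = Eps v ** Eps u.
Proof.
move=> hv hu; apply: functional_extensionality => h; apply: functional_extensionality => g.
rewrite lconv; last by case: (bilin_Eps hu).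
rewrite /Eps /conv1 /sw scaler_sumr; apply: eq_bigr => p _.
by rewrite scalerAr.
Qed.

Lemma Q_conv1 (act : H -> A -> A) (v u : H -> A) :
  bilin act -> (forall h a b, act h (a * b) = sw delta h (fun x y => act x a * act y b)) ->
  Qm act (conv1 delta v u) = Qm act v ** Qm act u.
Proof.
move=> [a1 a2] hm; apply: functional_extensionality => x; apply: functional_extensionality => y.
rewrite /Qm /conv1 /sw /conv2 (lin_sum _ _ (a1 x)) exchange_big /=.
by apply: eq_bigr => s _; rewrite hm.
Qed.

Lemma M_conv1 (u v : H -> A) : lin u -> lin v ->
  Mm (conv1 delta u v) = Mm u ** Mm v.
Proof.
move=> hu hv; apply: functional_extensionality => x; apply: functional_extensionality => y.
rewrite /Mm /conv1 (delta_mul (f := fun a b => u a * v b)) //; split.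
- by move=> a; apply: lin_mulr.
- by move=> b; apply: lin_mull.
Qed.

Lemma Q_tr (act : H -> A -> A) (u u' v : H -> A) : bilin act -> lin u -> lin u' -> lin v ->
  Qm (act_tr delta act u u') v = Eps u ** (Qm act v ** Eps u').
Proof.
move=> ha hu hu' hv.
apply: functional_extensionality => x; apply: functional_extensionality => y.
have hQ := bilin_Q ha hv.
rewrite lconv; last by case: (bilin_conv2 hQ (bilin_Eps hu')).
rewrite /Qm /act_tr; apply: eq_bigr => p _.
rewrite rconv; last by case: hQ.
rewrite mulr_sumr; apply: eq_bigr => q _; by rewrite mulrA.
Qed.

Lemma Q_e (act : H -> A -> A) (v : H -> A) : bilin act -> lin v ->
  (forall h a b, act h (a * b) = sw delta h (fun x y => act x a * act y b)) ->
  Qm act v ** Eps (e_map act) = Qm act v.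
Proof.
move=> ha hv hm.
apply: functional_extensionality => x; apply: functional_extensionality => y.
rewrite rconv; last by case: (bilin_Q ha hv).
by rewrite /Qm /e_map -[in RHS](mulr1 (v y)) hm.
Qed.

Lemma act_tr_bilin (act : H -> A -> A) (u u' : H -> A) : bilin act -> lin u -> lin u' ->
  bilin (act_tr delta act u u').
Proof.
move=> [a1 a2] hu hu'; split.
- move=> x; rewrite /act_tr; apply: lin_sumf => p; apply: lin_sumf => q.
  exact: (lin_mull _ (lin_mulr _ (a1 _))).
- move=> a.
  have -> : (fun x => act_tr delta act u u' x a)
            = conv1 delta u (conv1 delta (fun x => act x a) u').
    by apply: functional_extensionality => x; rewrite act_tr_conv.
  by apply: conv1_lin => //; apply: conv1_lin.
Qed.

Lemma conv1A_f (f g l : H -> A) : lin f -> lin g -> lin l ->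
  conv1 delta (conv1 delta f g) l = conv1 delta f (conv1 delta g l).
Proof.
by move=> hf hg hl; apply: functional_extensionality => h; rewrite conv1A.
Qed.

Lemma conv2A_r (F G K : H -> H -> A) : bilin F -> bilin G -> bilin K ->
  F ** (G ** K) = (F ** G) ** K.
Proof. by move=> *; rewrite conv2A. Qed.

End Hopf.

Theorem lemma5p3 (k : fieldType) (H : algType k)
    (delta : H -> seq (H * H)) (eps : H -> k) (S : H -> H)
    (hH : is_hopf delta eps S)
    (A : algType k) (act : H -> A -> A) (omega : H -> H -> A)
    (hsym : symmetric_tpa delta eps act omega)
    (u uinv v vinv : H -> A)
    (hu : weak_inv delta act u uinv)
    (hv : weak_inv delta act v vinv)
    (hvu : weak_inv delta act (conv1 delta v u) (conv1 delta uinv vinv)) :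
  (forall h g : H,
     omega_tr delta act omega (conv1 delta v u) (conv1 delta uinv vinv) h g
     = omega_tr delta (act_tr delta act u uinv) (omega_tr delta act omega u uinv)
                v vinv h g)
  /\ (forall (h : H) (a : A),
     act_tr delta act (conv1 delta v u) (conv1 delta uinv vinv) h a
     = act_tr delta (act_tr delta act u uinv) v vinv h a).
Proof.
case: hsym => [[ha [hom [_ [hm _]]]] _].
case: hu => [lu [lu' [cu'u _]]].
case: hv => [lv [lv' _]].
case: hvu => [lW [lW' _]].
have [a1 a2] := ha.
have Bil := @bilin_conv2 k H delta eps S hH A.
have BE := @bilin_Eps k H delta eps S hH A.
have BQ := @bilin_Q k H A.
have BM := @bilin_M k H A.
split.
- move=> h g.
  have Ou : omega_tr delta act omega u uinv
            = conv2 delta (Eps eps u) (conv2 delta (Qm act u) (conv2 delta omega (Mm uinv))).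
    apply: functional_extensionality => x; apply: functional_extensionality => y.
    exact: (omega_conv hH).
  have hOu : bilin (omega_tr delta act omega u uinv).
    by rewrite Ou; apply: (Bil); [apply: (BE) | apply: (Bil); [apply: (BQ) | apply: (Bil) => //; apply: (BM)]].
  have hAu := act_tr_bilin hH ha lu lu'.
  rewrite (omega_conv hH) // (omega_conv hH) //.
  rewrite Ou (Q_tr hH) // (Eps_conv1 hH) // (Q_conv1 v u ha hm) (M_conv1 hH) //.
  have Eu : conv2 delta (Eps eps uinv) (Eps eps u) = Eps eps (e_map act).
    rewrite -(Eps_conv1 hH) //; congr Eps.
    by apply: functional_extensionality => x; rewrite cu'u.
  have le : lin (e_map act) by move=> c x y; rewrite /e_map a2.
  have hE : bilin (Eps eps (e_map act)) by apply: (BE).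
  rewrite !(conv2A hH); try by repeat first [ apply: (Bil) | apply: (BE) | apply: (BQ) | apply: (BM) | assumption ].
  rewrite -(conv2A hH (F:=Eps eps uinv) (G:=Eps eps u)); try by repeat first [ apply: (Bil) | apply: (BE) | apply: (BQ) | apply: (BM) | assumption ].
  rewrite Eu -(conv2A hH (F:=Qm act v) (G:=Eps eps (e_map act))); try by repeat first [ apply: (Bil) | apply: (BE) | apply: (BQ) | apply: (BM) | assumption ].
  rewrite (Q_e hH) //.
- move=> h a.
  rewrite !act_tr_conv.
  have -> : (fun x => act_tr delta act u uinv x a)
            = conv1 delta u (conv1 delta (fun x => act x a) uinv).
    by apply: functional_extensionality => x; rewrite act_tr_conv.
  have la := a2 a.
  rewrite !(conv1A_f hH); try by repeat first [ apply: (conv1_lin hH) | assumption ].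
Qed.
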